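(* Let $B$ be a minimum-weight basis of the weighted uncertainty matroid $\mathcal{M}=(E,\mathcal{I},A,w)$. A set $Q\subseteq E$ is a certificate that verifies $B$ if and only if $U_e(Q)\le L_f(Q)$ for all $e\in B$ and all $f\in (E\setminus\mathrm{span}_M(B\setminus\{e\}))\setminus\{e\}$.
   Context: A weighted uncertainty matroid $\mathcal{M}=(E,\mathcal{I},A,w)$ consists of a matroid $M=(E,\mathcal{I})$ on a finite set $E$, for each $e\in E$ a non-empty finite union $A_e$ of bounded real intervals (each open or closed), and a weight $w_e\in A_e$. Let $L_e=\inf A_e$, $U_e=\sup A_e$. A minimum-weight basis is a basis of $M$ minimizing the sum of weights $w$. A weight assignment is $w^*:E\to\mathbb{R}$ with $w^*_e\in A_e$ for all $e$, consistent with $Q$ if $w^*_e=w_e$ for $e\in Q$. $Q$ verifies $B$ (is a certificate for $B$) if for every weight assignment $w^*$ consistent with $Q$, $B$ is a minimum-weight basis with respect to $w^*$. For $Q\subseteq E$: $L_e(Q)=w_e$ if $e\in Q$ and $L_e(Q)=L_e$ otherwise; $U_e(Q)=w_e$ if $e\in Q$ and $U_e(Q)=U_e$ otherwise. $\mathrm{span}_M(X)=\{e\in E: r(X\cup\{e\})=r(X)\}$ with $r$ the rank function of $M$. *)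

(* Defs.v *)
From mathcomp Require Import all_boot all_order all_algebra.
From mathcomp Require boolp classical_sets.
From mathcomp Require Import reals.
Set Implicit Arguments. Unset Strict Implicit. Unset Printing Implicit Defensive.
Import Order.TTheory GRing.Theory Num.Theory.
Local Open Scope ring_scope.

Section Matroid.
Variable E : finType.
Variable indep : {set E} -> bool.

Definition is_matroid : Prop :=
  [/\ indep set0,
      (forall X Y : {set E}, Y \subset X -> indep X -> indep Y) &
      (forall X Y : {set E}, indep X -> indep Y -> #|X| < #|Y| ->
          exists2 e, e \in Y :\: X & indep (e |: X))]%N.

Definition is_basis (B : {set E}) : bool := maxset indep B.

Definition rank (X : {set E}) : nat :=
  \max_(I : {set E} | (I \subset X) && indep I) #|I|.

Definition mspan (X : {set E}) : {set E} :=
  [set e | rank (e |: X) == rank X].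
End Matroid.

(* An interval is encoded as (closed?, left endpoint, right endpoint):
   (true, a, b) is [a,b], (false, a, b) is (a,b). An uncertainty area is a
   finite list of such bounded intervals, denoting their union. *)
Definition in_interval {R : realType} (I : bool * R * R) (x : R) : bool :=
  let: (c, a, b) := I in if c then (a <= x <= b) else (a < x < b).

Definition area {R : realType} (s : seq (bool * R * R)) : classical_sets.set R :=
  fun x => has (fun I => in_interval I x) s.

Definition valid_area {R : realType} (s : seq (bool * R * R)) : Prop :=
  exists x, area s x.

Definition Lo {R : realType} (s : seq (bool * R * R)) : R := inf (area s).
Definition Up {R : realType} (s : seq (bool * R * R)) : R := sup (area s).

Section Weighted.
Variables (R : realType) (E : finType) (indep : {set E} -> bool).
Variable A : E -> seq (bool * R * R).
Variable w : E -> R.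

Definition min_weight_basis (ws : E -> R) (B : {set E}) : Prop :=
  is_basis indep B /\
  forall B' : {set E}, is_basis indep B' ->
    \sum_(e in B) ws e <= \sum_(e in B') ws e.

Definition consistent (Q : {set E}) (ws : E -> R) : Prop :=
  (forall e, area (A e) (ws e)) /\ (forall e, e \in Q -> ws e = w e).

Definition verifies (Q B : {set E}) : Prop :=
  forall ws : E -> R, consistent Q ws -> min_weight_basis ws B.

Definition LQ (Q : {set E}) (e : E) : R := if e \in Q then w e else Lo (A e).
Definition UQ (Q : {set E}) (e : E) : R := if e \in Q then w e else Up (A e).
End Weighted.

(* Main.v *)
Require Import Defs.
From mathcomp Require Import all_boot all_order all_algebra.
From mathcomp Require Import reals.
From mathcomp Require boolp classical_sets.
From mathcomp Require Import zify lra.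
Set Implicit Arguments. Unset Strict Implicit. Unset Printing Implicit Defensive.
Import Order.TTheory GRing.Theory Num.Theory.
Local Open Scope ring_scope.

Lemma max_in (R : realType) (T : finType) (ws : T -> R) (X : {set T}) x0 :
  x0 \in X -> exists2 x, x \in X & forall y, y \in X -> ws y <= ws x.
Proof.
move=> Hx0; case: (Order.TotalTheory.arg_maxP ws Hx0) => i Hi Hmax.
by exists i.
Qed.

Lemma sum_thresh (R : realType) (T : finType) (ws : T -> R) (n : nat) :
  forall X Y : {set T}, #|X| = n -> #|Y| = n ->
  (forall t : R, leq #|[set y in Y | ws y < t]| #|[set x in X | ws x < t]|) ->
  \sum_(x in X) ws x <= \sum_(y in Y) ws y.
Proof.
elim: n => [|n IH] X Y hX hY H.
  by move/eqP: hX; rewrite cards_eq0 => /eqP ->; move/eqP: hY; rewrite cards_eq0 => /eqP ->; rewrite !big_set0.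
have [x0 Hx0] : exists x, x \in X by apply/set0Pn; rewrite -card_gt0 hX.
have [y0 Hy0] : exists y, y \in Y by apply/set0Pn; rewrite -card_gt0 hY.
have [xm Hxm Mx] := max_in ws Hx0.
have [ym Hym My] := max_in ws Hy0.
have cntall : forall (Z : {set T}) t, (forall z, z \in Z -> ws z < t) ->
   #|[set z in Z | ws z < t]| = #|Z|.
  move=> Z t HZ; apply: eq_card => z; rewrite inE.
  by case Hz: (z \in Z) => //=; rewrite HZ.
have cntD1 : forall (Z : {set T}) z t, z \in Z ->
   #|[set u in Z | ws u < t]| = addn (ws z < t)%R #|[set u in Z :\ z | (ws u < t)%R]|.
  move=> Z z t Hz; rewrite (cardsD1 z [set u in Z | ws u < t]) inE Hz /=.
  congr (_ + _)%N; apply: eq_card => u; rewrite !inE.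
  by rewrite andbA.
have cX : #|X :\ xm| = n by move: hX; rewrite (cardsD1 xm X) Hxm add1n => -[].
have cY : #|Y :\ ym| = n by move: hY; rewrite (cardsD1 ym Y) Hym add1n => -[].
have cntle : forall (Z : {set T}) t, leq #|[set u in Z | (ws u < t)%R]| #|Z|.
  move=> Z t; apply: subset_leq_card; apply/subsetP => u; rewrite inE; by case/andP.
have hxy : ws xm <= ws ym.
  rewrite leNgt; apply/negP => Hlt.
  have := H (ws xm).
  rewrite cntall; last by move=> y Hy; exact: le_lt_trans (My y Hy) Hlt.
  rewrite (cntD1 X xm) // ltxx add0n hY.
  have := cntle (X :\ xm) (ws xm); rewrite cX; lia.
rewrite (big_setD1 _ Hxm) (big_setD1 _ Hym) /=.
apply: lerD => //.
apply: IH => // t.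
have h := H t; rewrite (cntD1 X xm) // (cntD1 Y ym) // in h.
have b1 : leq #|[set u in Y :\ ym | ws u < t]| n.
  by rewrite -cY cntle.
case: (boolP (ws ym < t)) => Hy; case: (boolP (ws xm < t)) => Hx.
- move: h; rewrite /=; lia.
- by move: Hx; rewrite (le_lt_trans hxy Hy).
- have : #|[set u in X :\ xm | ws u < t]| = n.
    rewrite -cX cntall // => u; rewrite inE => /andP[_ Hu]; exact: le_lt_trans (Mx u Hu) Hx.
  lia.
- move: h; rewrite /=; lia.
Qed.

Section Mat.
Variables (E : finType) (indep : {set E} -> bool).
Hypothesis hM : is_matroid indep.

Lemma rank_le (X : {set E}) : (rank indep X <= #|X|)%N.
Proof. by apply/bigmax_leqP => I /andP[hI _]; apply: subset_leq_card. Qed.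

Lemma rank_ge (I X : {set E}) : I \subset X -> indep I -> (#|I| <= rank indep X)%N.
Proof. move=> hI iI; rewrite /rank; apply: (leq_bigmax_cond (F := fun I : {set E} => #|I|)); by rewrite hI iI. Qed.

Lemma notspan_indep (X : {set E}) f : indep X -> f \notin mspan indep X -> indep (f |: X).
Proof.
move=> iX; apply: contraR => nI; rewrite /mspan inE.
have r1 : rank indep X = #|X| by apply/eqP; rewrite eqn_leq rank_le rank_ge.
rewrite r1 eqn_leq rank_ge ?subsetUr // andbT.
apply/bigmax_leqP => I /andP[hI iI].
have nIe : I != f |: X by apply: contraNneq nI => <-.
have := proper_card (etrans (properEneq I (f |: X)) (introT andP (conj nIe hI))).
rewrite cardsU1; case: (f \notin X) => /=; lia.
Qed.

Lemma indep_notspan (X : {set E}) f : indep (f |: X) -> f \notin X -> f \notin mspan indep X.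
Proof.
move=> iI fX; rewrite /mspan inE; apply/negP => /eqP h.
have := rank_ge (subxx (f |: X)) iI; rewrite h cardsU1 fX.
have := rank_le X; lia.
Qed.

Lemma basis_indep (B : {set E}) : is_basis indep B -> indep B.
Proof. by case/maxsetP. Qed.

Lemma basis_card (B B' : {set E}) : is_basis indep B -> is_basis indep B' -> #|B| = #|B'|.
Proof.
case: hM => h0 hsub haug.
have gen : forall X Y, is_basis indep X -> is_basis indep Y -> (#|X| <= #|Y|)%N.
  move=> X Y /maxsetP[iX _] /maxsetP[iY mY]; rewrite leqNgt; apply/negP => lt.
  have [e he ie] := haug Y X iY iX lt.
  have := mY _ ie (subsetUr _ _) => eq.
  move: he; rewrite inE => /andP[]; rewrite -{1}eq setU11 //.
move=> hB hB'; apply/eqP; rewrite eqn_leq !gen //.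
Qed.

Lemma indep_card_basis (B J : {set E}) : is_basis indep B -> indep J -> #|J| = #|B| -> is_basis indep J.
Proof.
case: hM => h0 hsub haug.
move=> /maxsetP[iB mB] iJ cJ; apply/maxsetP; split => // K iK JK.
apply/eqP; rewrite eq_sym eqEcard JK /=; rewrite leqNgt; apply/negP => lt.
rewrite cJ in lt.
have [e he ie] := haug B K iB iK lt.
have := mB _ ie (subsetUr _ _) => eq.
move: he; rewrite inE => /andP[]; rewrite -{1}eq setU11 //.
Qed.

Lemma extend n : forall I B : {set E}, (#|B| - #|I|)%N = n -> indep I -> indep B -> (#|I| <= #|B|)%N ->
  exists J, [/\ indep J, I \subset J, J \subset I :|: B & #|J| = #|B| ].
Proof.
case: hM => h0 hsub haug.
elim: n => [|n IH] I B hn iI iB le.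
  exists I; split => //; [exact: subsetUl| apply/eqP; rewrite eqn_leq le; lia].
have lt : (#|I| < #|B|)%N by lia.
have [x hx ix] := haug I B iI iB lt.
move: hx; rewrite inE => /andP[xI xB].
have cx : #|x |: I| = #|I|.+1 by rewrite cardsU1 xI.
have [J [iJ sJ sJ2 cJ]] := IH (x |: I) B ltac:(lia) ix iB ltac:(lia).
exists J; split => //.
- by apply: subset_trans sJ; apply: subsetUr.
- apply: (subset_trans sJ2); apply/subsetP => y; rewrite !inE => /orP[/orP[/eqP->|->]|->] //.
  - by rewrite xB orbT.
  - by rewrite orbT.
Qed.
End Mat.

Lemma in_int_bound (R : realType) (I : bool * R * R) x :
  in_interval I x -> `|x| <= `|I.1.2| + `|I.2|.
Proof.
case: I => [[c a] b] /=.
have h1 := ler_norm a; have h2 := ler_norm (-a); have h3 := ler_norm b; have h4 := ler_norm (-b).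
rewrite normrN in h2; rewrite normrN in h4.
rewrite ler_norml.
case: c => /andP[ha hb]; apply/andP; split.
all: lra.
Qed.

Lemma area_bound (R : realType) (s : seq (bool * R * R)) :
  exists M, forall x, area s x -> `|x| <= M.
Proof.
exists (\sum_(I <- s) (`|I.1.2| + `|I.2|)) => x.
rewrite /area; elim: s => [|I s IH] //= /orP[h|h]; rewrite big_cons.
- have := in_int_bound h.
  have : 0 <= \sum_(J <- s) (`|J.1.2| + `|J.2|) by apply: sumr_ge0 => J _; apply: addr_ge0.
  lra.
- have := IH h; have : 0 <= `|I.1.2| + `|I.2| by apply: addr_ge0. lra.
Qed.

Lemma area_sup (R : realType) (s : seq (bool * R * R)) : valid_area s ->
  classical_sets.has_sup (area s).
Proof.
move=> [x hx]; split; first by exists x.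
have [M hM] := area_bound s; exists M => y hy.
have := hM y hy; rewrite ler_norml => /andP[_ ->] //.
Qed.

Lemma area_inf (R : realType) (s : seq (bool * R * R)) : valid_area s ->
  classical_sets.has_inf (area s).
Proof.
move=> [x hx]; split; first by exists x.
have [M hM] := area_bound s; exists (- M) => y hy.
have := hM y hy; rewrite ler_norml => /andP[-> _] //.
Qed.
Theorem lemma8 (R : realType) (E : finType) (indep : {set E} -> bool)
  (hM : is_matroid indep)
  (A : E -> seq (bool * R * R)) (hA : forall e, valid_area (A e))
  (w : E -> R) (hw : forall e, area (A e) (w e))
  (B : {set E}) (hB : min_weight_basis indep w B) (Q : {set E}) :
  verifies indep A w Q B <->
  (forall e f, e \in B ->
     f \in (~: mspan indep (B :\ e)) :\ e ->
     UQ A w Q e <= LQ A w Q f).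
Proof.
have hM' := hM; case: hM' => h0 hsub haug.
have iB : indep B by apply: basis_indep; case: hB.
split.
- move=> Hver e f He Hf; rewrite leNgt; apply/negP => Hlt.
  move: Hf; rewrite in_setD1 in_setC => /andP[fe fsp].
  have iBe : indep (B :\ e) by apply: hsub iB; apply: subsetDl.
  have If : indep (f |: (B :\ e)) by apply: notspan_indep.
  have fBe : f \notin B :\ e.
    apply: contra fsp => fin; rewrite /mspan inE.
    suff -> : f |: (B :\ e) = B :\ e by [].
    by apply/setUidPr; rewrite sub1set.
  pose c := (UQ A w Q e + LQ A w Q f) / 2.
  have [xe [Axe Qe hxe]] : exists xe, [/\ area (A e) xe, (e \in Q -> xe = w e) & c < xe].
    case: (boolP (e \in Q)) => eQ.
      exists (w e); split => //; move: Hlt; rewrite /c /UQ eQ => Hlt; lra.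
    have [y Ay hy] := sup_adherent (eps := UQ A w Q e - c) ltac:(rewrite /c; lra) (area_sup (hA e)).
    exists y; split => //; move: hy; rewrite /UQ (negbTE eQ) /Up; lra.
  have [xf [Axf Qf hxf]] : exists xf, [/\ area (A f) xf, (f \in Q -> xf = w f) & xf < c].
    case: (boolP (f \in Q)) => fQ.
      exists (w f); split => //; move: Hlt; rewrite /c /LQ fQ => Hlt; lra.
    have [y Ay hy] := inf_adherent (eps := c - LQ A w Q f) ltac:(rewrite /c; lra) (area_inf (hA f)).
    exists y; split => //; move: hy; rewrite /LQ (negbTE fQ) /Lo; lra.
  pose ws g := if g == e then xe else if g == f then xf else w g.
  have cons : consistent A w Q ws.
    split => g.
    + rewrite /ws; case: eqP => [->|_] //; case: eqP => [->|_] //.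
    + rewrite /ws; case: eqP => [->|_]; first exact: Qe.
      case: eqP => [->|_] //; exact: Qf.
  have [_ Hmin] := Hver ws cons.
  have hB' : is_basis indep (f |: (B :\ e)).
    apply: (indep_card_basis hM (proj1 hB) If).
    by rewrite cardsU1 fBe (cardsD1 e B) He.
  have := Hmin _ hB'.
  rewrite (big_setD1 _ He) (big_setU1 _ fBe) /= /ws eqxx (negbTE fe) eqxx.
  lra.
- move=> Hc ws [Harea HQ]; split; first by case: hB.
  move=> B' HB'.
  have UB : forall g, ws g <= UQ A w Q g.
    move=> g; rewrite /UQ; case: (boolP (g \in Q)) => gQ; first by rewrite HQ.
    exact: (sup_upper_bound (area_sup (hA g))).
  have LB : forall g, LQ A w Q g <= ws g.
    move=> g; rewrite /LQ; case: (boolP (g \in Q)) => gQ; first by rewrite HQ.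
    exact: (ge_inf (proj2 (area_inf (hA g)))).
  have cB := basis_card hM (proj1 hB) HB'.
  apply: (@sum_thresh _ _ ws #|B|) => // t.
  rewrite leqNgt; apply/negP => Hlt.
  set Bt := [set x in B | ws x < t] in Hlt.
  set B't := [set x in B' | ws x < t] in Hlt.
  have iBt : indep Bt by apply: hsub iB; apply/subsetP => x; rewrite inE => /andP[].
  have iB't : indep B't.
    by apply: hsub (basis_indep HB'); apply/subsetP => x; rewrite inE => /andP[].
  have [f hf ift] := haug Bt B't iBt iB't Hlt.
  move: hf; rewrite !inE => /andP[fBt /andP[fB' ft]].
  have fB : f \notin B by move: fBt; rewrite ft andbT.
  have cB't : (#|B't| <= #|B|)%N.
    rewrite cB; apply: subset_leq_card; apply/subsetP => x; rewrite inE => /andP[] //.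
  have cI : #|f |: Bt| = #|Bt|.+1.
    by rewrite cardsU1 /Bt inE (negbTE fB).
  have leI : (#|f |: Bt| <= #|B|)%N by rewrite cI; apply: leq_trans Hlt cB't.
  have [J [iJ sJ sJ2 cJ]] := extend hM (erefl _) ift iB leI.
  have sJ3 : J \subset f |: B.
    apply: (subset_trans sJ2); apply/subsetP => y; rewrite !inE => /orP[/orP[->|/andP[->]]|->] //;
    by rewrite orbT.
  have : ~~ (f |: B \subset J).
    apply/negP => sub; have := subset_leq_card sub; by rewrite cJ cardsU1 fB add1n ltnn.
  case/subsetPn => e eI eJ.
  have ef : e != f by move: (eJ); apply: contraNneq => ->; apply: (subsetP sJ); rewrite !inE eqxx.
  have eB : e \in B by move: eI; rewrite !inE (negbTE ef).
  have et : t <= ws e.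
    rewrite leNgt; move: (eJ); apply: contra => et; apply: (subsetP sJ); by rewrite !inE eB et orbT.
  have JK : J = f |: (B :\ e).
    apply/eqP; rewrite eqEcard; apply/andP; split.
      apply/subsetP => y yJ.
      have yne : y != e by move: (eJ); apply: contraNneq => <-.
      have := subsetP sJ3 y yJ; rewrite !inE yne /=; exact.
    have -> : #|f |: (B :\ e)| = #|B :\ e|.+1.
      by rewrite cardsU1 in_setD1 (negbTE fB) andbF.
    by rewrite cJ (cardsD1 e B) eB.
  have fBe : f \notin B :\ e by rewrite in_setD1 (negbTE fB) andbF.
  have fsp : f \notin mspan indep (B :\ e).
    apply: indep_notspan => //; by rewrite -JK.
  have := Hc e f eB; rewrite in_setD1 in_setC fsp eq_sym ef => /(_ isT) hle.
  have := UB e; have := LB f; lra.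
Qed.
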